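(* Let $n\ge 3$ be an integer and let $a_1,\dots,a_n$ be real numbers such that $2a_k\le a_{k-1}+a_{k+1}$ for $k=2,\dots,n-1$ and $0\le 2a_n\le a_{n-1}$. Then for all $x\in(0,\pi)$, $$L_n(x)=\sum_{j=1}^n a_j\sin(jx)-\sum_{j=1}^{n-2}a_{j+2}\sin(jx)\ge 0.$$ *)

(* Defs.v *)
From Stdlib Require Import Reals.
Open Scope R_scope.

Fixpoint sumR (m : nat) (f : nat -> R) : R :=
  match m with
  | O => 0
  | S k => sumR k f + f (S k)
  end.

Definition Ln (n : nat) (a : nat -> R) (x : R) : R :=
  sumR n (fun j => a j * sin (INR j * x))
  - sumR (n - 2) (fun j => a (j + 2)%nat * sin (INR j * x)).

(* Main.v *)
Require Import Defs.
From Stdlib Require Import Reals Lra Lia Psatz.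
Open Scope R_scope.

Definition Rk (a : nat -> R) (x : R) (k : nat) : R :=
  sumR k (fun j => (a j - 2 * a (S j) + a (S (S j))) * (1 - cos (INR j * x)))
  + (a (S k) - 2 * a (S (S k))) * (1 - cos (INR (S k) * x))
  + a (S (S k)) * (1 - cos (INR (S (S k)) * x)).

Lemma key (a : nat -> R) (x : R) (k : nat) :
  (1 - cos x) * Ln (S (S k)) a x = sin x * Rk a x k.
Proof.
  induction k as [|k IH].
  - unfold Ln, Rk. simpl sumR. simpl INR.
    replace ((1 + 1) * x) with (x + x) by ring.
    replace (1 * x) with x by ring.
    rewrite sin_plus, cos_plus.
    pose proof (sin2_cos2 x) as Hsc. unfold Rsqr in Hsc. match goal with |- ?L = ?R => replace L with (R + a 2%nat * sin x * (1 - (sin x * sin x + cos x * cos x))) by ring end. rewrite Hsc. ring.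
  - assert (E1 : Ln (S (S (S k))) a x = Ln (S (S k)) a x
        + a (S (S (S k))) * (sin (INR (S (S (S k))) * x) - sin (INR (S k) * x))).
    { unfold Ln. replace (S (S (S k)) - 2)%nat with (S k) by lia.
      replace (S (S k) - 2)%nat with k by lia.
      change (sumR (S (S (S k))) (fun j => a j * sin (INR j * x)))
        with (sumR (S (S k)) (fun j => a j * sin (INR j * x)) + a (S (S (S k))) * sin (INR (S (S (S k))) * x)).
      change (sumR (S k) (fun j => a (j + 2)%nat * sin (INR j * x)))
        with (sumR k (fun j => a (j + 2)%nat * sin (INR j * x)) + a (S k + 2)%nat * sin (INR (S k) * x)).
      replace (S k + 2)%nat with (S (S (S k))) by lia. ring. }
    assert (E2 : Rk a x (S k) = Rk a x k
        + a (S (S (S k))) * ((1 - cos (INR (S k) * x)) - 2 * (1 - cos (INR (S (S k)) * x))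
             + (1 - cos (INR (S (S (S k))) * x)))).
    { unfold Rk. cbn [sumR]. ring_simplify. lra. }
    rewrite E1, E2, Rmult_plus_distr_l, IH, Rmult_plus_distr_l.
    set (y := INR (S (S k)) * x).
    assert (H1 : INR (S k) * x = y - x) by (unfold y; rewrite (S_INR (S k)); ring).
    assert (H2 : INR (S (S (S k))) * x = y + x) by (unfold y; rewrite (S_INR (S (S k))); ring).
    rewrite H1, H2, sin_plus, sin_minus, cos_plus, cos_minus. ring.
Qed.

Lemma sumR_nonneg (m : nat) (f : nat -> R) :
  (forall j, (1 <= j <= m)%nat -> 0 <= f j) -> 0 <= sumR m f.
Proof.
  induction m as [|m IH]; intros H; simpl; [lra|].
  assert (0 <= f (S m)) by (apply H; lia).
  assert (0 <= sumR m f) by (apply IH; intros; apply H; lia). lra.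
Qed.

Lemma one_minus_cos (y : R) : 0 <= 1 - cos y.
Proof. pose proof (COS_bound y). lra. Qed.

Theorem lemma2p4 (n : nat) (a : nat -> R)
  (hn : (3 <= n)%nat)
  (hconv : forall k : nat, (2 <= k)%nat -> (k <= n - 1)%nat ->
             2 * a k <= a (k - 1)%nat + a (k + 1)%nat)
  (hlast0 : 0 <= 2 * a n)
  (hlast1 : 2 * a n <= a (n - 1)%nat) :
  forall x : R, 0 < x < PI -> 0 <= Ln n a x.
Proof.
  intros x [hx0 hxp].
  destruct n as [|[|k]]; try lia.
  pose proof (key a x k) as K.
  assert (Hs : 0 < sin x) by (apply sin_gt_0; lra).
  assert (Hc : cos x < 1).
  { rewrite <- cos_0. apply cos_decreasing_1; lra. }
  assert (HR : 0 <= Rk a x k).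
  { unfold Rk.
    assert (0 <= sumR k (fun j => (a j - 2 * a (S j) + a (S (S j))) * (1 - cos (INR j * x)))).
    { apply sumR_nonneg. intros j Hj. apply Rmult_le_pos; [|apply one_minus_cos].
      pose proof (hconv (S j) ltac:(lia) ltac:(lia)) as Hc'.
      replace (S j - 1)%nat with j in Hc' by lia.
      replace (S j + 1)%nat with (S (S j)) in Hc' by lia. lra. }
    replace (S (S k) - 1)%nat with (S k) in hlast1 by lia.
    pose proof (one_minus_cos (INR (S k) * x)).
    pose proof (one_minus_cos (INR (S (S k)) * x)).
    nra. }
  assert (0 <= (1 - cos x) * Ln (S (S k)) a x) by (rewrite K; nra).
  nra.
Qed.
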